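(* Consider the faulty-starter delivery problem described in the context, with finisher starting position $(x,y)$, $y\ge0$, and $(x,y)\notin D(1,1)$. Then for every $a\in[0,1]$ and every algorithm $\mathcal{A}_a$ of the class described in the context, either $\mathrm{CR}_{\mathcal{A}_1}\le\mathrm{CR}_{\mathcal{A}_a}$ or $\mathrm{CR}_{\mathcal{A}_0}\le\mathrm{CR}_{\mathcal{A}_a}$.
   Context: Setting. In the plane let $S=(0,0)$ and $T=(1,0)$. A ''starter'' drone carrying a package starts at $S$ at time $0$ and moves at unit speed along $\overline{ST}$ towards $T$. At an unknown time $t\in[0,1]$ it fails and stays forever at $(t,0)$ with the package (at time $s$ the package is at $(\min\{s,t\},0)$). A ''finisher'' drone starts at time $0$ at $P=(x,y)$ with $y\ge0$, moves at unit speed and can stop and turn instantaneously. The package can be handed over only when the drones are co-located; it is delivered at the first time the finisher, carrying the package, is at $T$. An online algorithm $\mathcal{A}$ specifies the finisher's trajectory using only $(x,y)$; $A(t)$ is its delivery time for fail time $t$. $\mathrm{Opt}(t)=\max\{1,\sqrt{(x-t)^2+y^2}+1-t\}$ is the optimal offline delivery time. $\mathrm{CR}_{\mathcal{A}}(t)=A(t)/\mathrm{Opt}(t)$ and $\mathrm{CR}_{\mathcal{A}}=\sup_{0\le t\le1}\mathrm{CR}_{\mathcal{A}}(t)$. $D(c,r)$ denotes the open disk of radius $r$ centered at $(c,0)$. Algorithms. $\mathcal{A}_0$: the finisher goes straight to $S$, then along $\overline{ST}$ towards $T$ until it finds the package, then on to $T$. $\mathcal{A}_1$: the finisher goes straight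 to $T$, then along the segment towards $S$ until it finds the package, then returns to $T$. For $a\in[0,1]$, an algorithm $\mathcal{A}_a$ is any online algorithm in which the finisher moves from $P$ along a straight line to $(a,0)$ and afterwards remains within $\overline{ST}$ until it picks up the package, after which it goes to $T$. *)

(* Defs.v *)
From Stdlib Require Import Reals Lra.
Open Scope R_scope.

Definition pt : Type := (R * R)%type.

Definition edist (u v : pt) : R :=
  sqrt ((fst u - fst v) ^ 2 + (snd u - snd v) ^ 2).

Definition Spt : pt := (0, 0).
Definition Tpt : pt := (1, 0).

(* Position of the package at time s when the starter fails at time t. *)
Definition pkg (t s : R) : pt := (Rmin s t, 0).

Definition speed_le_1 (p : R -> pt) : Prop :=
  forall s s', 0 <= s -> 0 <= s' -> edist (p s) (p s') <= Rabs (s - s').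

Definition first_meet (p : R -> pt) (t tau : R) : Prop :=
  0 <= tau /\ p tau = pkg t tau /\
  (forall s, 0 <= s < tau -> p s <> pkg t s).

Definition delivery (p : R -> pt) (tau : R) : R := tau + edist (p tau) Tpt.

(* Optimal offline delivery time for finisher start (x,y). *)
Definition Opt (x y t : R) : R :=
  Rmax 1 (sqrt ((x - t) ^ 2 + y ^ 2) + 1 - t).

(* "CR_p <= M", i.e. sup_{t in [0,1]} A(t)/Opt(t) <= M, where A(t) = +oo
   if the finisher never picks up the package. *)
Definition CR_bounded (x y : R) (p : R -> pt) (M : R) : Prop :=
  forall t, 0 <= t <= 1 ->
    exists tau, first_meet p t tau /\ delivery p tau / Opt x y t <= M.

(* CR_p <= CR_q (as elements of [0, +oo]). *)
Definition CR_le (x y : R) (p q : R -> pt) : Prop :=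
  forall M, CR_bounded x y q M -> CR_bounded x y p M.

(* Straight unit-speed motion from P=(x,y) towards Q, position at time s
   (for 0 <= s <= edist P Q). *)
Definition seg_pos (x y : R) (Q : pt) (s : R) : pt :=
  let d := edist (x, y) Q in
  (x + s * (fst Q - x) / d, y + s * (snd Q - y) / d).

Definition traj0 (x y : R) (s : R) : pt :=
  let d := edist (x, y) Spt in
  if Rle_dec s d then seg_pos x y Spt s
  else if Rle_dec s (d + 1) then (s - d, 0) else Tpt.

Definition traj1 (x y : R) (s : R) : pt :=
  let d := edist (x, y) Tpt in
  if Rle_dec s d then seg_pos x y Tpt s
  else if Rle_dec s (d + 1) then (1 - (s - d), 0) else Spt.

Definition is_Aa (x y a : R) (p : R -> pt) : Prop :=
  speed_le_1 p /\
  (forall s, 0 <= s <= edist (x, y) (a, 0) -> p s = seg_pos x y (a, 0) s) /\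
  (forall s, edist (x, y) (a, 0) <= s -> snd (p s) = 0 /\ 0 <= fst (p s) <= 1).

(* Main.v *)
Require Import Defs.
From Stdlib Require Import Reals Lra Psatz Classical.
Open Scope R_scope.

Definition Dd (x y q : R) : R := sqrt ((x - q)^2 + y^2).

Lemma Dd_ge0 x y q : 0 <= Dd x y q.
Proof. apply sqrt_pos. Qed.

Lemma Dd_sq x y q : Dd x y q ^ 2 = (x - q)^2 + y^2.
Proof. unfold Dd. rewrite pow2_sqrt; [reflexivity | apply Rplus_le_le_0_compat; apply pow2_ge_0]. Qed.

Lemma edist_axis x y q : edist (x, y) (q, 0) = Dd x y q.
Proof. unfold edist, Dd; cbn [fst snd]. f_equal. ring. Qed.

Lemma edist_line a b : edist (a, 0) (b, 0) = Rabs (a - b).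
Proof.
  unfold edist; cbn [fst snd].
  replace ((a - b) ^ 2 + (0 - 0) ^ 2) with (Rsqr (a - b)) by (unfold Rsqr; ring).
  apply sqrt_Rsqr_abs.
Qed.

Lemma Dd_tri x y q t : q <= t -> Dd x y t <= Dd x y q + (t - q).
Proof.
  intros H. pose proof (Dd_ge0 x y q). pose proof (Dd_ge0 x y t).
  pose proof (Dd_sq x y q). pose proof (Dd_sq x y t).
  assert (Dd x y q >= q - x) by nra.
  nra.
Qed.

Lemma Dd_tri2 x y q t : q <= t -> Dd x y q <= Dd x y t + (t - q).
Proof.
  intros H. pose proof (Dd_ge0 x y q). pose proof (Dd_ge0 x y t).
  pose proof (Dd_sq x y q). pose proof (Dd_sq x y t).
  assert (Dd x y t >= x - t) by nra.
  nra.
Qed.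

Lemma Dd_star x y m t : 1 <= Dd x y 1 -> 0 <= m -> m <= t -> t <= 1 ->
  Dd x y m * (1 - t) <= Dd x y t * (1 - m).
Proof.
  intros H1 Hm Hmt Ht. pose proof (Dd_ge0 x y m) as Hm0. pose proof (Dd_ge0 x y t) as Ht0.
  pose proof (Dd_sq x y m) as Hm2. pose proof (Dd_sq x y t) as Ht2. pose proof (Dd_sq x y 1) as H12.
  pose proof (Dd_ge0 x y 1) as H10.
  assert (Habs : x - 1 >= - Dd x y 1).
  { destruct (Rle_or_lt (- Dd x y 1) (x - 1)); [lra|].
    assert (Dd x y 1 ^ 2 < (x-1)^2) by nra. nra. }
  assert (Hk : ((x-1)^2+y^2)*((1-t)+(1-m)) + 2*(x-1)*(1-t)*(1-m) >= 0).
  { rewrite <- H12.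
    assert (2*(x-1)*(1-t)*(1-m) >= - 2 * Dd x y 1 *(1-t)*(1-m)).
    { assert (0 <= (1-t)*(1-m)) by nra. nra. }
    assert (Dd x y 1 ^2 * ((1 - t) + (1 - m)) >= Dd x y 1 * ((1 - t) + (1 - m))).
    { assert (0 <= Dd x y 1 * (Dd x y 1 - 1) * ((1 - t) + (1 - m))).
      { apply Rmult_le_pos; [apply Rmult_le_pos|]; lra. }
      nra. }
    assert ((1 - t) + (1 - m) - 2 * (1-t)*(1-m) >= 0) by nra.
    nra. }
  assert (Hsq : (Dd x y m * (1-t))^2 <= (Dd x y t * (1-m))^2).
  { replace ((Dd x y m * (1-t))^2) with (Dd x y m ^2 * (1-t)^2) by ring.
    replace ((Dd x y t * (1-m))^2) with (Dd x y t ^2 * (1-m)^2) by ring.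
    rewrite Hm2, Ht2.
    assert (E : ((x - t) ^ 2 + y ^ 2) * (1 - m) ^ 2 - ((x - m) ^ 2 + y ^ 2) * (1 - t) ^ 2
      = (t - m) * (((x-1)^2+y^2)*((1-t)+(1-m)) + 2*(x-1)*(1-t)*(1-m))) by ring.
    assert (0 <= (t - m) * (((x-1)^2+y^2)*((1-t)+(1-m)) + 2*(x-1)*(1-t)*(1-m))).
    { apply Rmult_le_pos; lra. }
    lra. }
  assert (0 <= Dd x y t * (1 - m)) by (apply Rmult_le_pos; lra).
  destruct (Rle_or_lt (Dd x y m * (1 - t)) (Dd x y t * (1 - m))); [lra|].
  assert (0 <= Dd x y m * (1 - t)) by lra. nra.
Qed.

Lemma div_le_M a b M : 0 < b -> a / b <= M -> a <= M * b.
Proof.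
  intros Hb H. apply (Rmult_le_compat_r b) in H; [|lra].
  replace (a / b * b) with a in H by (field; lra). exact H.
Qed.

Lemma le_div_M a b M : 0 < b -> a <= M * b -> a / b <= M.
Proof.
  intros Hb H. apply (Rmult_le_reg_r b); [lra|].
  replace (a / b * b) with a by (field; lra). exact H.
Qed.

Lemma edist_S x y : edist (x, y) Spt = Dd x y 0.
Proof. unfold edist, Dd, Spt; cbn [fst snd]. f_equal. ring. Qed.

Lemma edist_T x y : edist (x, y) Tpt = Dd x y 1.
Proof. unfold edist, Dd, Tpt; cbn [fst snd]. f_equal. ring. Qed.

Lemma first_meet_uniq p t t1 t2 : first_meet p t t1 -> first_meet p t t2 -> t1 = t2.
Proof.
  intros [H0 [H1 H2]] [H0' [H1' H2']].
  destruct (Rtotal_order t1 t2) as [Hl | [He | Hg]]; auto.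
  - exfalso. apply (H2' t1); [lra | exact H1].
  - exfalso. apply (H2 t2); [lra | exact H1'].
Qed.

Lemma meet_lb x y p t tau : speed_le_1 p -> p 0 = (x, y) -> t <= 1 ->
  first_meet p t tau ->
  Dd x y (Rmin tau t) <= tau /\ Rmin tau t <= tau /\ Rmin tau t <= t /\
  p tau = (Rmin tau t, 0) /\ delivery p tau = tau + (1 - Rmin tau t).
Proof.
  intros Hsp Hp0 Ht [H0 [H1 H2]].
  assert (Hq1 : Rmin tau t <= tau) by apply Rmin_l.
  assert (Hq2 : Rmin tau t <= t) by apply Rmin_r.
  pose proof (Hsp 0 tau (Rle_refl 0) H0) as Hs.
  rewrite Hp0, H1 in Hs. unfold pkg in Hs. rewrite edist_axis in Hs.
  rewrite Rabs_left1 in Hs by lra.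
  repeat split; try lra.
  - exact H1.
  - unfold delivery. rewrite H1. unfold pkg, Tpt. rewrite edist_line.
    rewrite Rabs_left1 by lra. ring.
Qed.

Lemma Opt_eq x y t : 1 <= Dd x y 1 -> t <= 1 -> Opt x y t = Dd x y t + 1 - t.
Proof.
  intros H1 Ht. unfold Opt. fold (Dd x y t).
  apply Rmax_right. pose proof (Dd_tri x y t 1 Ht). lra.
Qed.

Lemma pair_inv (a b c d : R) : (a, b) = (c, d) -> a = c /\ b = d.
Proof. intros H; inversion H; auto. Qed.

Lemma Dd0_zero x y : Dd x y 0 = 0 -> x = 0 /\ y = 0.
Proof. intros H. pose proof (Dd_sq x y 0) as E. rewrite H in E. nra. Qed.

Lemma traj0_meet x y t : 1 <= Dd x y 1 -> 0 <= t <= 1 ->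
  exists tau, first_meet (traj0 x y) t tau /\ delivery (traj0 x y) tau <= Dd x y 0 + 1.
Proof.
  intros H1 Ht.
  pose proof (Dd_ge0 x y 0) as Hd0. pose proof (Dd_sq x y 0) as Hd0s.
  pose proof (Dd_sq x y 1) as Hd1s.
  destruct (Req_dec (Dd x y 0) 0) as [Hz | Hnz].
  - destruct (Dd0_zero x y Hz) as [-> ->].
    assert (E0 : traj0 0 0 0 = (0, 0)).
    { unfold traj0. rewrite edist_S, Hz.
      destruct (Rle_dec 0 0) as [_|n]; [|lra].
      unfold seg_pos. rewrite edist_S, Hz. f_equal; unfold Rdiv; ring. }
    exists 0. split.
    + split; [lra|]. split.
      * rewrite E0. unfold pkg. f_equal. rewrite Rmin_left; lra.
      * intros s Hs; lra.
    + unfold delivery. rewrite E0. unfold Tpt. rewrite edist_line, Hz.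
      rewrite Rabs_left1; lra.
  - assert (Hpos : 0 < Dd x y 0) by lra.
    destruct (classic (y = 0 /\ 2 <= x)) as [[Hy Hx] | Hnot].
    + subst y.
      assert (Hdx : Dd x 0 0 = x).
      { assert (E : (Dd x 0 0 - x) * (Dd x 0 0 + x) = 0).
        { replace ((Dd x 0 0 - x) * (Dd x 0 0 + x)) with (Dd x 0 0 ^ 2 - x ^ 2) by ring.
          rewrite Hd0s. ring. }
        apply Rmult_integral in E as [E|E]; lra. }
      exists (x - t).
      assert (Hseg : forall s, 0 <= s <= x -> traj0 x 0 s = (x - s, 0)).
      { intros s Hs. unfold traj0. rewrite edist_S, Hdx.
        destruct (Rle_dec s x) as [_|n]; [|lra].
        unfold seg_pos. rewrite edist_S, Hdx. unfold Spt; cbn [fst snd].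
        f_equal; field; lra. }
      split.
      * split; [lra|]. split.
        -- rewrite Hseg by lra. unfold pkg. rewrite Rmin_right by lra. f_equal; ring.
        -- intros s Hs E. rewrite Hseg in E by lra. unfold pkg in E.
           apply pair_inv in E as [E _].
           pose proof (Rmin_r s t). lra.
      * unfold delivery. rewrite Hseg by lra. unfold Tpt. rewrite edist_line.
        replace (x - (x - t) - 1) with (t - 1) by ring. rewrite Rabs_left1 by lra. lra.
    + set (d := Dd x y 0) in *.
      assert (Hseg : forall s, 0 <= s <= d ->
         traj0 x y s = ((1 - s / d) * x, (1 - s / d) * y)).
      { intros s Hs. unfold traj0. rewrite edist_S. fold d.
        destruct (Rle_dec s d) as [_|n]; [|lra].
        unfold seg_pos. rewrite edist_S. fold d. unfold Spt; cbn [fst snd].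
        f_equal; field; lra. }
      assert (Hmid : forall s, d < s <= d + 1 -> traj0 x y s = (s - d, 0)).
      { intros s Hs. unfold traj0. rewrite edist_S. fold d.
        destruct (Rle_dec s d) as [r|_]; [lra|].
        destruct (Rle_dec s (d + 1)) as [_|n]; [|lra]. reflexivity. }
      exists (d + t). split.
      * split; [lra|]. split.
        -- unfold pkg. rewrite Rmin_right by lra.
           destruct (Req_dec t 0) as [-> | Ht0].
           ++ rewrite Hseg by lra. f_equal.
              ** replace (1 - (d+0)/d) with 0 by (field; lra). ring.
              ** replace (1 - (d+0)/d) with 0 by (field; lra). ring.
           ++ rewrite Hmid by lra. f_equal. ring.
        -- intros s Hs E. unfold pkg in E.
           destruct (Rle_dec s d) as [Hsd | Hsd].
           ++ rewrite Hseg in E by lra. apply pair_inv in E as [E1 E2].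
              destruct (Req_dec s d) as [-> | Hsd'].
              ** replace (1 - d/d) with 0 in E1 by (field; lra).
                 assert (Rmin d t = 0) by lra.
                 unfold Rmin in H. destruct (Rle_dec d t); lra.
              ** assert (Hl : 0 < 1 - s / d).
                 { assert (s / d < 1). { apply (Rmult_lt_reg_r d); [lra|].
                   replace (s / d * d) with s by (field; lra). lra. } lra. }
                 assert (y = 0) by nra. subst y.
                 assert (x < 0).
                 { destruct (Rlt_or_le x 0); auto. exfalso. apply Hnot. split; auto.
                   destruct (Req_dec x 0) as [-> | ]. { exfalso; apply Hnz. unfold d, Dd.
                   replace ((0-0)^2+0^2) with 0 by ring. apply sqrt_0. }
                   assert ((x-1)^2 + 0^2 >= 1).
                   { pose proof (Dd_ge0 x 0 1). nra. }
                   nra. }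
                 pose proof (Rmin_glb s t 0 (proj1 Hs) (proj1 Ht)). nra.
           ++ rewrite Hmid in E by lra. apply pair_inv in E as [E1 _].
              unfold Rmin in E1. destruct (Rle_dec s t); lra.
      * unfold delivery.
        assert (Hp : traj0 x y (d + t) = (t, 0)).
        { destruct (Req_dec t 0) as [-> | Ht0].
          - rewrite Hseg by lra. f_equal.
            + replace (1 - (d+0)/d) with 0 by (field; lra). ring.
            + replace (1 - (d+0)/d) with 0 by (field; lra). ring.
          - rewrite Hmid by lra. f_equal. ring. }
        rewrite Hp. unfold Tpt. rewrite edist_line. rewrite Rabs_left1 by lra. lra.
Qed.

Lemma traj1_meet x y t : 1 <= Dd x y 1 -> ~ (y = 0 /\ x <= 0) -> 0 <= t <= 1 ->
  exists tau, first_meet (traj1 x y) t tau /\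
    delivery (traj1 x y) tau <= Dd x y 1 + 2 * (1 - t).
Proof.
  intros H1 Hnot Ht.
  pose proof (Dd_sq x y 1) as Hd1s.
  set (d := Dd x y 1) in *.
  assert (Hseg : forall s, 0 <= s <= d ->
     traj1 x y s = (x + s / d * (1 - x), (1 - s / d) * y)).
  { intros s Hs. unfold traj1. rewrite edist_T. fold d.
    destruct (Rle_dec s d) as [_|n]; [|lra].
    unfold seg_pos. rewrite edist_T. fold d. unfold Tpt; cbn [fst snd].
    f_equal; field; lra. }
  assert (Hmid : forall s, d < s <= d + 1 -> traj1 x y s = (1 - (s - d), 0)).
  { intros s Hs. unfold traj1. rewrite edist_T. fold d.
    destruct (Rle_dec s d) as [r|_]; [lra|].
    destruct (Rle_dec s (d + 1)) as [_|n]; [|lra]. reflexivity. }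
  assert (Hlate : forall s, d + 1 < s -> traj1 x y s = (0, 0)).
  { intros s Hs. unfold traj1. rewrite edist_T. fold d.
    destruct (Rle_dec s d) as [r|_]; [lra|].
    destruct (Rle_dec s (d + 1)) as [r|_]; [lra|]. reflexivity. }
  assert (Hp : traj1 x y (d + 1 - t) = (t, 0)).
  { destruct (Req_dec t 1) as [-> | Ht1].
    - rewrite Hseg by lra. f_equal.
      + replace ((d + 1 - 1) / d) with 1 by (field; lra). ring.
      + replace (1 - (d + 1 - 1) / d) with 0 by (field; lra). ring.
    - rewrite Hmid by lra. f_equal. ring. }
  exists (d + 1 - t). split.
  - split; [lra|]. split.
    + rewrite Hp. unfold pkg. rewrite Rmin_right by lra. reflexivity.
    + intros s Hs E. unfold pkg in E.
      destruct (Rle_dec s d) as [Hsd | Hsd].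
      * rewrite Hseg in E by lra. apply pair_inv in E as [E1 E2].
        destruct (Req_dec s d) as [-> | Hsd'].
        -- replace (d/d) with 1 in E1 by (field; lra).
           assert (Rmin d t = 1) by lra.
           unfold Rmin in H. destruct (Rle_dec d t); lra.
        -- assert (Hl : 0 < 1 - s / d).
           { assert (s / d < 1). { apply (Rmult_lt_reg_r d); [lra|].
             replace (s / d * d) with s by (field; lra). lra. } lra. }
           assert (y = 0) by nra. subst y.
           assert (Hx : 2 <= x).
           { destruct (Rle_or_lt x 0) as [Hx|Hx]. { exfalso; apply Hnot; auto. }
             assert ((x-1)^2 + 0^2 >= 1).
             { pose proof (Dd_ge0 x 0 1). fold d in H. nra. }
             nra. }
           assert (Hdx : d = x - 1).
           { assert (E : (d - (x - 1)) * (d + (x - 1)) = 0).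
             { replace ((d - (x - 1)) * (d + (x - 1))) with (d ^ 2 - (x-1) ^ 2) by ring.
               rewrite Hd1s. ring. }
             apply Rmult_integral in E as [E|E]; lra. }
           rewrite Hdx in E1.
           replace (x + s / (x - 1) * (1 - x)) with (x - s) in E1 by (field; lra).
           pose proof (Rmin_r s t). lra.
      * destruct (Rle_dec s (d + 1)) as [Hs1 | Hs1].
        -- rewrite Hmid in E by lra. apply pair_inv in E as [E1 _].
           rewrite Rmin_right in E1 by lra. lra.
        -- rewrite Hlate in E by lra. apply pair_inv in E as [E1 _].
           unfold Rmin in E1. destruct (Rle_dec s t); lra.
  - unfold delivery. rewrite Hp. unfold Tpt. rewrite edist_line.
    rewrite Rabs_left1 by lra. lra.
Qed.

Theorem lemma4 (x y : R) (hy : 0 <= y) (hP : ~ (edist (x, y) (1, 0) < 1))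
  (a : R) (ha : 0 <= a <= 1) (p : R -> pt) (hp : is_Aa x y a p) :
  CR_le x y (traj1 x y) p \/ CR_le x y (traj0 x y) p.
Proof.
  destruct hp as [hsp [hseg hax]].
  assert (p0 : p 0 = (x, y)).
  { rewrite hseg by (split; [lra | apply sqrt_pos]). unfold seg_pos.
    f_equal; unfold Rdiv; ring. }
  assert (hd1 : 1 <= Dd x y 1) by (rewrite <- edist_axis; lra).
  pose proof (Dd_ge0 x y 0) as hd0.
  destruct (classic (exists tau1, first_meet p 1 tau1)) as [[tau1 Hm1] | Hno].
  2: { left. intros M HM. exfalso. destruct (HM 1) as [tau [Hf _]]; [lra|].
       apply Hno; eauto. }
  destruct (meet_lb x y p 1 tau1 hsp p0 (Rle_refl 1) Hm1) as [Hq1a [Hq1b [Hq1c [Hq1p Hq1d]]]].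
  set (q1 := Rmin tau1 1) in *.
  assert (HW1 : forall M, CR_bounded x y p M -> delivery p tau1 <= M * Dd x y 1).
  { intros M HM. destruct (HM 1) as [tau [Hf Hr]]; [lra|].
    rewrite (first_meet_uniq p 1 tau tau1 Hf Hm1) in Hr.
    rewrite Opt_eq in Hr by lra. apply div_le_M in Hr; lra. }
  assert (HWge : Dd x y 1 <= delivery p tau1).
  { pose proof (Dd_tri x y q1 1 Hq1c). lra. }
  destruct (Rle_or_lt (Dd x y 0 + 1) (delivery p tau1)) as [HA | HB].
  - right. intros M HM t Ht.
    destruct (traj0_meet x y t hd1 Ht) as [tau0 [Hf0 Hdel0]].
    exists tau0. split; auto.
    pose proof (HW1 M HM) as HW.
    rewrite Opt_eq by lra. apply le_div_M.
    + pose proof (Dd_tri x y t 1 (proj2 Ht)). lra.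
    + pose proof (Dd_tri x y t 1 (proj2 Ht)).
      assert (1 <= M).
      { assert (Dd x y 1 <= M * Dd x y 1) by lra. nra. }
      nra.
  - left. intros M HM t Ht.
    pose proof (HW1 M HM) as HW.
    assert (HM1 : 1 <= M).
    { assert (Dd x y 1 <= M * Dd x y 1) by lra. nra. }
    assert (Htau0 : 0 <= tau1) by (destruct Hm1; lra).
    assert (Htau1 : 1 <= tau1).
    { destruct (Rlt_or_le tau1 1) as [Hlt|]; auto. exfalso.
      assert (Hq : q1 = tau1) by (unfold q1; apply Rmin_left; lra).
      rewrite Hq in *.
      assert (Hd0p : 0 < Dd x y 0) by lra.
      pose proof (Dd_sq x y 0) as S0. pose proof (Dd_sq x y 1) as S1.
      pose proof (Dd_sq x y tau1) as St. pose proof (Dd_ge0 x y tau1).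
      assert (Dd x y tau1 ^ 2 <= tau1 ^ 2) by nra.
      assert (1 <= Dd x y 1 ^ 2) by nra.
      assert (0 < Dd x y 0 ^ 2) by nra.
      assert (x * (1 - tau1) <= 0) by nra.
      assert (x <= 0) by nra.
      nra. }
    assert (Hq : q1 = 1) by (unfold q1; apply Rmin_right; lra).
    rewrite Hq in Hq1p, Hq1d.
    assert (HWt : delivery p tau1 = tau1) by lra.
    assert (Hnot : ~ (y = 0 /\ x <= 0)).
    { intros [Hy Hx]. subst y.
      pose proof (Dd_sq x 0 0) as S0. pose proof (Dd_sq x 0 1) as S1.
      pose proof (Dd_ge0 x 0 1).
      assert (Dd x 0 0 = - x).
      { assert (E : (Dd x 0 0 - (- x)) * (Dd x 0 0 + (- x)) = 0).
        { replace ((Dd x 0 0 - (- x)) * (Dd x 0 0 + (- x))) with (Dd x 0 0 ^ 2 - x ^ 2) by ring.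
          rewrite S0. ring. }
        apply Rmult_integral in E as [E|E]; lra. }
      assert (Dd x 0 1 = 1 - x).
      { assert (E : (Dd x 0 1 - (1 - x)) * (Dd x 0 1 + (1 - x)) = 0).
        { replace ((Dd x 0 1 - (1 - x)) * (Dd x 0 1 + (1 - x))) with (Dd x 0 1 ^ 2 - (1 - x) ^ 2) by ring.
          rewrite S1. ring. }
        apply Rmult_integral in E as [E|E]; lra. }
      lra. }
    destruct (traj1_meet x y t hd1 Hnot Ht) as [tauA [HfA HdA]].
    exists tauA. split; auto.
    rewrite Opt_eq by lra.
    assert (HOt : Dd x y 1 <= Dd x y t + 1 - t) by (pose proof (Dd_tri x y t 1 (proj2 Ht)); lra).
    apply le_div_M; [lra|].
    enough (Dd x y 1 + 2 * (1 - t) <= M * (Dd x y t + 1 - t)) by lra.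
    set (S := fun s => exists tau, first_meet p s tau /\ tau <= tau1).
    assert (notS : forall s, 0 <= s <= 1 -> ~ S s ->
               tau1 + 2 * (1 - s) <= M * (Dd x y s + 1 - s)).
    { intros s Hs HnS. destruct (HM s Hs) as [taus [Hfs Hrs]].
      assert (Hgt : tau1 < taus).
      { destruct (Rlt_or_le tau1 taus); auto. exfalso. apply HnS. exists taus; auto. }
      destruct (meet_lb x y p s taus hsp p0 (proj2 Hs) Hfs) as [Ha [Hb [Hc [Hpp Hdd]]]].
      pose proof (hsp taus tau1 ltac:(destruct Hfs; lra) Htau0) as Hsp.
      rewrite Hpp, Hq1p, edist_line in Hsp.
      rewrite Rabs_left1 in Hsp by lra. rewrite Rabs_right in Hsp by lra.
      rewrite Opt_eq in Hrs by lra.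
      apply div_le_M in Hrs; [|pose proof (Dd_tri x y s 1 (proj2 Hs)); lra].
      lra. }
    assert (isS : forall s, 0 <= s <= 1 -> S s -> Dd x y s + 1 - s <= tau1).
    { intros s Hs [taus [Hfs Hle]].
      destruct (meet_lb x y p s taus hsp p0 (proj2 Hs) Hfs) as [Ha [Hb [Hc [Hpp Hdd]]]].
      pose proof (hsp taus tau1 ltac:(destruct Hfs; lra) Htau0) as Hsp.
      rewrite Hpp, Hq1p, edist_line in Hsp.
      rewrite Rabs_left1 in Hsp by lra. rewrite Rabs_left1 in Hsp by lra.
      pose proof (Dd_tri x y (Rmin taus s) s Hc). lra. }
    destruct (classic (S t)) as [HSt | HnSt].
    2: { pose proof (notS t Ht HnSt). lra. }
    set (E := fun s => 0 <= s <= t /\ forall s', 0 <= s' < s -> ~ S s').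
    assert (Eb : bound E) by (exists t; intros e [He _]; lra).
    assert (E0 : exists e, E e) by (exists 0; split; [lra | intros; lra]).
    destruct (completeness E Eb E0) as [m [Hub Hlub]].
    assert (Hm0 : 0 <= m) by (apply Hub; split; [lra | intros; lra]).
    assert (Hmt : m <= t) by (apply Hlub; intros e [He _]; lra).
    assert (Hi : forall s, 0 <= s < m -> ~ S s).
    { intros s Hs HS.
      assert (m <= s).
      { apply Hlub. intros e [He He2]. destruct (Rle_or_lt e s); auto.
        exfalso. apply (He2 s); [lra | exact HS]. }
      lra. }
    assert (Hii : forall eps, 0 < eps -> exists s', S s' /\ m <= s' <= t /\ s' < m + eps).
    { intros eps Heps. apply NNPP. intros Hno.
      destruct (Req_dec m t) as [Heq | Hneq].
      - apply Hno. exists t. repeat split; auto; lra.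
      - set (e := Rmin (m + eps / 2) t).
        assert (He1 : m < e) by (unfold e, Rmin; destruct Rle_dec; lra).
        assert (He2 : e <= t) by apply Rmin_r.
        assert (He3 : e <= m + eps / 2) by apply Rmin_l.
        assert (E e).
        { split; [lra|]. intros s' Hs' HS'.
          destruct (Rlt_or_le s' m).
          - apply (Hi s'); [lra | auto].
          - apply Hno. exists s'. repeat split; auto; lra. }
        pose proof (Hub e H). lra. }
    set (rho := Dd x y m + 1 - m).
    assert (Hrho : tau1 >= rho).
    { destruct (Rge_or_gt tau1 rho) as [|Hlt]; auto. exfalso.
      destruct (Hii ((rho - tau1) / 4) ltac:(lra)) as [s' [HS' [Hs'1 Hs'2]]].
      pose proof (isS s' ltac:(lra) HS').
      pose proof (Dd_tri2 x y m s' (proj1 Hs'1)).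
      unfold rho in *. lra. }
    assert (Hmpos : 0 < m).
    { destruct (Rlt_or_le 0 m); auto. assert (m = 0) by lra. subst m.
      unfold rho in Hrho. lra. }
    assert (Hrhopos : Dd x y 1 <= rho).
    { unfold rho. pose proof (Dd_tri x y m 1 ltac:(lra)). lra. }
    assert (Hc : rho + 2 * (1 - m) <= M * rho).
    { destruct (Rle_or_lt (rho + 2 * (1 - m)) (M * rho)) as [|Hlt]; auto. exfalso.
      set (c := rho + 2 * (1 - m) - M * rho).
      assert (Hcpos : 0 < c) by (unfold c; lra).
      set (delta := Rmin m (c / (4 * M))).
      assert (Hd1 : 0 < delta).
      { unfold delta, Rmin. destruct Rle_dec; auto.
        apply Rdiv_lt_0_compat; lra. }
      assert (Hd2 : delta <= m) by apply Rmin_l.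
      assert (Hd3 : delta <= c / (4 * M)) by apply Rmin_r.
      assert (Hd4 : 4 * M * delta <= c).
      { apply (Rmult_le_compat_l (4 * M)) in Hd3; [|lra].
        replace (4 * M * (c / (4 * M))) with c in Hd3 by (field; lra). lra. }
      pose proof (Hi (m - delta) ltac:(lra)) as HnS.
      pose proof (notS (m - delta) ltac:(lra) HnS) as Hn.
      pose proof (Dd_tri2 x y (m - delta) m ltac:(lra)) as Ht2.
      assert (M * (Dd x y (m - delta) + 1 - (m - delta)) <= M * (rho + 2 * delta)).
      { apply Rmult_le_compat_l; [lra|]. unfold rho. lra. }
      unfold c in *. nra. }
    pose proof (Dd_star x y m t hd1 Hm0 Hmt (proj2 Ht)) as Hstar.
    pose proof (Dd_tri x y t 1 (proj2 Ht)) as Htri.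
    assert (Hkey : (Dd x y 1 + 2 * (1 - t)) * rho <= (rho + 2 * (1 - m)) * (Dd x y t + 1 - t)).
    { unfold rho in *. nra. }
    assert (Hfin : (Dd x y 1 + 2 * (1 - t)) * rho <= (M * (Dd x y t + 1 - t)) * rho).
    { assert (0 <= Dd x y t + 1 - t) by lra. nra. }
    apply Rmult_le_reg_r in Hfin; lra.
Qed.
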